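(* For all closed terms $P,Q\in\mathcal S_A$: $\mathrm{EqFSCL}\vdash P=Q$ if and only if $\mathbb M_{se}\models P=Q$, i.e. if and only if $se(P)=se(Q)$.
   Context: Let $A$ be a nonempty set of atoms. The signature $\Sigma_{SCL}(A)$ consists of the constants $\mathsf T,\mathsf F$, each atom $a\in A$ as a constant, unary negation $\neg$, and binary connectives $x\land^\circ y$ (left-sequential conjunction) and $x\lor^\circ y$ (left-sequential disjunction). $\mathcal S_A$ is the set of closed terms over $\Sigma_{SCL}(A)$. EqFSCL is the following set of equations in variables $x,y,z$: (F1) $\mathsf F=\neg\mathsf T$; (F2) $x\lor^\circ y=\neg(\neg x\land^\circ\neg y)$; (F3) $\neg\neg x=x$; (F4) $\mathsf T\land^\circ x=x$; (F5) $x\lor^\circ\mathsf F=x$; (F6) $\mathsf F\land^\circ x=\mathsf F$; (F7) $(x\land^\circ y)\land^\circ z=x\land^\circ(y\land^\circ z)$; (F8) $\neg x\land^\circ\mathsf F=x\land^\circ\mathsf F$; (F9) $(x\land^\circ\mathsf F)\lor^\circ y=(x\lor^\circ\mathsf T)\land^\circ y$; (F10) $(x\land^\circ y)\lor^\circ(z\land^\circ\mathsf F)=(x\lor^\circ(z\land^\circ\mathsf F))\land^\circ(y\lor^\circ(z\land^\circ\mathsf F))$. $E\vdash s=t$ means derivability in equational logic from $E$. Evaluation trees $\mathcal T_A$: $\mathsf T,\mathsf F\in\mathcal T_A$ and $(X\unlhd a\unrhd Y)\in\mathcal T_A$ for $X,Y\in\mathcal T_A$, $a\in A$ (root $a$,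 left branch $X$, right branch $Y$). Leaf replacement: $\mathsf T[\mathsf T\mapsto Y,\mathsf F\mapsto Z]=Y$, $\mathsf F[\mathsf T\mapsto Y,\mathsf F\mapsto Z]=Z$, $(X_1\unlhd a\unrhd X_2)[\mathsf T\mapsto Y,\mathsf F\mapsto Z]=X_1[\ldots]\unlhd a\unrhd X_2[\ldots]$; omitted replacements are identities. $se:\mathcal S_A\to\mathcal T_A$: $se(\mathsf T)=\mathsf T$, $se(\mathsf F)=\mathsf F$, $se(a)=\mathsf T\unlhd a\unrhd\mathsf F$, $se(\neg P)=se(P)[\mathsf T\mapsto\mathsf F,\mathsf F\mapsto\mathsf T]$, $se(P\land^\circ Q)=se(P)[\mathsf T\mapsto se(Q)]$, $se(P\lor^\circ Q)=se(P)[\mathsf F\mapsto se(Q)]$. $\mathbb M_{se}$ is the $\Sigma_{SCL}(A)$-algebra with domain $\{se(P)\mid P\in\mathcal S_A\}$ interpreting $\mathsf T,\mathsf F,a$ as $\mathsf T,\mathsf F,\mathsf T\unlhd a\unrhd\mathsf F$ and $\neg X=X[\mathsf T\mapsto\mathsf F,\mathsf F\mapsto\mathsf T]$, $X\land^\circ Y=X[\mathsf T\mapsto Y]$, $X\lor^\circ Y=X[\mathsf F\mapsto Y]$; so the interpretation of a closed term $P$ is $se(P)$. *)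

(* Defs.v *)
Set Implicit Arguments.

Section Defs.
Variable A : Type.

Inductive term : Type :=
| Var : nat -> term
| TT : term
| FF : term
| Atom : A -> term
| Neg : term -> term
| AndL : term -> term -> term
| OrL : term -> term -> term.

Inductive sterm : Type :=
| sT : sterm
| sF : sterm
| sAtom : A -> sterm
| sNeg : sterm -> sterm
| sAndL : sterm -> sterm -> sterm
| sOrL : sterm -> sterm -> sterm.

Fixpoint emb (P : sterm) : term :=
  match P with
  | sT => TT
  | sF => FF
  | sAtom a => Atom a
  | sNeg P => Neg (emb P)
  | sAndL P Q => AndL (emb P) (emb Q)
  | sOrL P Q => OrL (emb P) (emb Q)
  end.

Fixpoint subst (s : nat -> term) (t : term) : term :=
  match t with
  | Var n => s n
  | TT => TT
  | FF => FF
  | Atom a => Atom a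
  | Neg t => Neg (subst s t)
  | AndL t u => AndL (subst s t) (subst s u)
  | OrL t u => OrL (subst s t) (subst s u)
  end.

Inductive derivable (E : term -> term -> Prop) : term -> term -> Prop :=
| d_ax : forall l r (s : nat -> term), E l r -> derivable E (subst s l) (subst s r)
| d_refl : forall t, derivable E t t
| d_sym : forall t u, derivable E t u -> derivable E u t
| d_trans : forall t u v, derivable E t u -> derivable E u v -> derivable E t v
| d_neg : forall t u, derivable E t u -> derivable E (Neg t) (Neg u)
| d_and : forall t t' u u', derivable E t t' -> derivable E u u' ->
    derivable E (AndL t u) (AndL t' u')
| d_or : forall t t' u u', derivable E t t' -> derivable E u u' ->
    derivable E (OrL t u) (OrL t' u').

Definition x := Var 0.
Definition y := Var 1.
Definition z := Var 2.

Inductive EqFSCL : term -> term -> Prop :=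
| F1 : EqFSCL FF (Neg TT)
| F2 : EqFSCL (OrL x y) (Neg (AndL (Neg x) (Neg y)))
| F3 : EqFSCL (Neg (Neg x)) x
| F4 : EqFSCL (AndL TT x) x
| F5 : EqFSCL (OrL x FF) x
| F6 : EqFSCL (AndL FF x) FF
| F7 : EqFSCL (AndL (AndL x y) z) (AndL x (AndL y z))
| F8 : EqFSCL (AndL (Neg x) FF) (AndL x FF)
| F9 : EqFSCL (OrL (AndL x FF) y) (AndL (OrL x TT) y)
| F10 : EqFSCL (OrL (AndL x y) (AndL z FF))
               (AndL (OrL x (AndL z FF)) (OrL y (AndL z FF))).

(** Evaluation trees T_A. Node X a Y = X <| a |> Y. *)
Inductive tree : Type :=
| LT : tree
| LF : tree
| Node : tree -> A -> tree -> tree.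

Fixpoint repl (X Y Z : tree) : tree :=
  match X with
  | LT => Y
  | LF => Z
  | Node X1 a X2 => Node (repl X1 Y Z) a (repl X2 Y Z)
  end.

Fixpoint se (P : sterm) : tree :=
  match P with
  | sT => LT
  | sF => LF
  | sAtom a => Node LT a LF
  | sNeg P => repl (se P) LF LT
  | sAndL P Q => repl (se P) (se Q) LF
  | sOrL P Q => repl (se P) LT (se Q)
  end.

End Defs.

(* Main.v *)
Require Import Defs.
From Stdlib Require Import Lia Setoid Morphisms.

Arguments LT {A}. Arguments LF {A}. Arguments Node {A}.
Arguments sT {A}. Arguments sF {A}. Arguments sNeg {A}. Arguments sAndL {A}. Arguments sOrL {A}.
Arguments TT {A}. Arguments FF {A}. Arguments Atom {A}. Arguments Neg {A}. Arguments AndL {A}.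
Arguments OrL {A}. Arguments Var {A}.

Section Trees.
Variable A : Type.
Notation tree := (tree A).

Fixpoint hasT (X : tree) : Prop :=
  match X with LT => True | LF => False | Node X1 _ X2 => hasT X1 \/ hasT X2 end.
Fixpoint hasF (X : tree) : Prop :=
  match X with LT => False | LF => True | Node X1 _ X2 => hasF X1 \/ hasF X2 end.
Fixpoint size (X : tree) : nat :=
  match X with LT => 1 | LF => 1 | Node X1 _ X2 => S (size X1 + size X2) end.
Definition mixed (X : tree) := hasT X /\ hasF X.
Implicit Types X Y Z U V W E C : tree.

Lemma repl_id X : repl X LT LF = X.
Proof. induction X; simpl; congruence. Qed.

Lemma repl_assoc X Y Z U V :
  repl (repl X Y Z) U V = repl X (repl Y U V) (repl Z U V).
Proof. induction X; simpl; congruence. Qed.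

Lemma hasT_or_hasF X : hasT X \/ hasF X.
Proof. induction X; simpl; tauto. Qed.

Lemma hasT_repl X Y Z :
  hasT (repl X Y Z) <-> (hasT X /\ hasT Y) \/ (hasF X /\ hasT Z).
Proof. induction X; simpl; tauto. Qed.
Lemma hasF_repl X Y Z :
  hasF (repl X Y Z) <-> (hasT X /\ hasF Y) \/ (hasF X /\ hasF Z).
Proof. induction X; simpl; tauto. Qed.

Lemma noT_repl X Y Y' Z : ~ hasT X -> repl X Y Z = repl X Y' Z.
Proof. induction X; simpl; intros; try tauto; f_equal; tauto. Qed.
Lemma noF_repl X Y Z Z' : ~ hasF X -> repl X Y Z = repl X Y Z'.
Proof. induction X; simpl; intros; try tauto; f_equal; tauto. Qed.
Lemma noT_id X Y : ~ hasT X -> repl X Y LF = X.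
Proof. intros H. rewrite (noT_repl X Y LT LF H). apply repl_id. Qed.
Lemma noF_id X Z : ~ hasF X -> repl X LT Z = X.
Proof. intros H. rewrite (noF_repl X LT Z LF H). apply repl_id. Qed.

Lemma size_pos X : 1 <= size X.
Proof. destruct X; simpl; lia. Qed.
Lemma size_repl_T X Y Z : hasT X -> size Y <= size (repl X Y Z).
Proof. induction X; simpl; intros H; try tauto; try lia.
  destruct H as [H|H]; [apply IHX1 in H|apply IHX2 in H]; lia. Qed.
Lemma size_repl_F X Y Z : hasF X -> size Z <= size (repl X Y Z).
Proof. induction X; simpl; intros H; try tauto; try lia.
  destruct H as [H|H]; [apply IHX1 in H|apply IHX2 in H]; lia. Qed.
Lemma size_repl_T' X Y Z : hasT X -> X <> LT -> size Y < size (repl X Y Z).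
Proof. destruct X; simpl; intros H H'; try tauto; try congruence.
  destruct H as [H|H]; [apply (size_repl_T _ Y Z) in H|apply (size_repl_T _ Y Z) in H]; lia. Qed.
Lemma size_repl_F' X Y Z : hasF X -> X <> LF -> size Z < size (repl X Y Z).
Proof. destruct X; simpl; intros H H'; try tauto; try congruence.
  destruct H as [H|H]; [apply (size_repl_F _ Y Z) in H|apply (size_repl_F _ Y Z) in H]; lia. Qed.



Lemma fixT X W : hasT W -> W = repl X W LF -> X = LT.
Proof.
  intros HW E. destruct X as [| |X1 a X2]; auto.
  - simpl in E; subst; simpl in HW; tauto.
  - destruct (hasT_or_hasF (Node X1 a X2)) as [H|H].
    + pose proof (size_repl_T' (Node X1 a X2) W LF H ltac:(discriminate)). rewrite <- E in H0. lia.
    + exfalso. assert (~ hasT (Node X1 a X2)) as Hn.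
      { intro Ht. pose proof (size_repl_T' (Node X1 a X2) W LF Ht ltac:(discriminate)). rewrite <- E in H0. lia. }
      rewrite noT_id in E by exact Hn. subst. tauto.
Qed.

Lemma fixF X W : hasF W -> W = repl X LT W -> X = LF.
Proof.
  intros HW E. destruct X as [| |X1 a X2]; auto.
  - simpl in E; subst; simpl in HW; tauto.
  - exfalso. destruct (hasT_or_hasF (Node X1 a X2)) as [H|H].
    + assert (~ hasF (Node X1 a X2)) as Hn.
      { intro Ht. pose proof (size_repl_F' (Node X1 a X2) LT W Ht ltac:(discriminate)). rewrite <- E in H0. lia. }
      rewrite noF_id in E by exact Hn. subst. tauto.
    + pose proof (size_repl_F' (Node X1 a X2) LT W H ltac:(discriminate)). rewrite <- E in H0. lia.
Qed.

Lemma injT X X' W : hasT W -> repl X W LF = repl X' W LF -> X = X'.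
Proof.
  revert X'. induction X as [| |X1 IH1 a X2 IH2]; intros X' HW E.
  - simpl in E. symmetry. apply (fixT X' W HW E).
  - destruct X' as [| |X1' a' X2']; simpl in E; try discriminate; auto.
    subst. simpl in HW. tauto.
  - destruct X' as [| |X1' a' X2']; simpl in E; try discriminate.
    + apply (fixT (Node X1 a X2) W HW). simpl. auto.
    + injection E; intros. f_equal; eauto.
Qed.

Lemma injF X X' W : hasF W -> repl X LT W = repl X' LT W -> X = X'.
Proof.
  revert X'. induction X as [| |X1 IH1 a X2 IH2]; intros X' HW E.
  - destruct X' as [| |X1' a' X2']; simpl in E; try discriminate; auto.
    subst. simpl in HW. tauto.
  - simpl in E. symmetry. apply (fixF X' W HW E).
  - destruct X' as [| |X1' a' X2']; simpl in E; try discriminate.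
    + apply (fixF (Node X1 a X2) W HW). simpl. auto.
    + injection E; intros. f_equal; eauto.
Qed.

Lemma growT E W : hasT (repl E W LF) -> E = LT \/ size W < size (repl E W LF).
Proof.
  intros H. destruct E as [| |E1 a E2]; auto.
  - simpl in H; tauto.
  - right. destruct (hasT_or_hasF (Node E1 a E2)) as [Ht|Hf].
    + destruct (hasT_or_hasF E1) ; apply size_repl_T'; auto; discriminate.
    + destruct (proj1 (hasT_repl _ _ _) H) as [[? ?]|[? ?]].
      * apply size_repl_T'; auto; discriminate.
      * simpl in H1. tauto.
Qed.
Lemma growF E W : hasF (repl E LT W) -> E = LF \/ size W < size (repl E LT W).
Proof.
  intros H. destruct E as [| |E1 a E2]; auto.
  - simpl in H; tauto.
  - right. destruct (proj1 (hasF_repl _ _ _) H) as [[? ?]|[? ?]].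
    + simpl in H1. tauto.
    + apply size_repl_F'; auto; discriminate.
Qed.

Lemma cycleT Y1 Y2 E1 E2 : hasT Y1 -> hasT Y2 ->
  Y1 = repl E1 Y2 LF -> Y2 = repl E2 Y1 LF -> E1 = LT /\ E2 = LT.
Proof.
  intros H1 H2 e1 e2.
  assert (g1 := growT E1 Y2 ltac:(rewrite <- e1; auto)).
  assert (g2 := growT E2 Y1 ltac:(rewrite <- e2; auto)).
  rewrite <- e1 in g1. rewrite <- e2 in g2.
  destruct g1 as [->|s1].
  - simpl in e1. subst. split; auto. apply (fixT E2 Y2 H1 e2).
  - destruct g2 as [->|s2]; [simpl in e2; rewrite e2 in s1|]; lia.
Qed.
Lemma cycleF Y1 Y2 E1 E2 : hasF Y1 -> hasF Y2 ->
  Y1 = repl E1 LT Y2 -> Y2 = repl E2 LT Y1 -> E1 = LF /\ E2 = LF.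
Proof.
  intros H1 H2 e1 e2.
  assert (g1 := growF E1 Y2 ltac:(rewrite <- e1; auto)).
  assert (g2 := growF E2 Y1 ltac:(rewrite <- e2; auto)).
  rewrite <- e1 in g1. rewrite <- e2 in g2.
  destruct g1 as [->|s1].
  - simpl in e1. subst. split; auto. apply (fixF E2 Y2 H1 e2).
  - destruct g2 as [->|s2]; [simpl in e2; rewrite e2 in s1|]; lia.
Qed.
Lemma cycleM Y1 Y2 P Q : mixed Y1 -> mixed Y2 ->
  Y2 = repl P LT Y1 -> Y1 = repl Q Y2 LF -> P = LF /\ Q = LT.
Proof.
  intros [H1 H1'] [H2 H2'] e1 e2.
  assert (g1 := growF P Y1 ltac:(rewrite <- e1; auto)).
  assert (g2 := growT Q Y2 ltac:(rewrite <- e2; auto)).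
  rewrite <- e1 in g1. rewrite <- e2 in g2.
  destruct g1 as [->|s1].
  - simpl in e1. subst. split; auto. apply (fixT Q Y1 H1 e2).
  - destruct g2 as [->|s2]; [simpl in e2; rewrite e2 in s1|]; lia.
Qed.

Lemma leviT X1 X2 Y1 Y2 : hasT Y1 -> hasT Y2 -> repl X1 Y1 LF = repl X2 Y2 LF ->
  (~ hasT X1 /\ X1 = X2) \/ (exists E, Y1 = repl E Y2 LF /\ X2 = repl X1 E LF)
  \/ (exists E, Y2 = repl E Y1 LF /\ X1 = repl X2 E LF).
Proof.
  intros H1 H2. revert X2. induction X1 as [| |X11 IH1 a X12 IH2]; intros X2 e.
  - right; left. exists X2. simpl in e. auto.
  - destruct X2 as [| |X21 b X22]; simpl in e; try discriminate.
    + subst. simpl in H2. tauto.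
    + left. simpl. auto.
  - destruct X2 as [| |X21 b X22]; simpl in e; try discriminate.
    + right; right. exists (Node X11 a X12). simpl. auto.
    + injection e; intros e2 ea e1. subst b.
      destruct (IH1 _ e1) as [[n1 q1]|[[E [p1 q1]]|[E [p1 q1]]]];
      destruct (IH2 _ e2) as [[n2 q2]|[[E' [p2 q2]]|[E' [p2 q2]]]].
      * left. simpl. split; [tauto|congruence].
      * right; left. exists E'. split; auto. simpl. rewrite noT_id by auto. congruence.
      * right; right. exists E'. split; auto. simpl. subst X21. rewrite noT_id by auto. congruence.
      * right; left. exists E. split; auto. simpl. rewrite (noT_id X12) by auto. congruence.
      * right; left. exists E. split; auto. assert (E = E') by (apply (injT _ _ Y2); congruence). subst. simpl. congruence.
      * destruct (cycleT Y1 Y2 E E' H1 H2 p1 p2) as [-> ->].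
        right; left. exists LT. split; auto. simpl. rewrite q1, q2, !repl_id. auto.
      * right; right. exists E. split; auto. simpl. subst X22. rewrite (noT_id X12) by auto. congruence.
      * destruct (cycleT Y1 Y2 E' E H1 H2 p2 p1) as [-> ->].
        right; left. exists LT. split; auto. simpl. rewrite q1, q2, !repl_id. auto.
      * right; right. exists E. split; auto. assert (E = E') by (apply (injT _ _ Y1); congruence). subst. simpl. congruence.
Qed.

Definition flip X := repl X LF LT.
Lemma flip_flip X : flip (flip X) = X.
Proof. unfold flip. rewrite repl_assoc. simpl. apply repl_id. Qed.
Lemma flip_T X Y : flip (repl X LT Y) = repl (flip X) (flip Y) LF.
Proof. unfold flip. rewrite !repl_assoc. reflexivity. Qed.
Lemma flip_F X Y : flip (repl X Y LF) = repl (flip X) LT (flip Y).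
Proof. unfold flip. rewrite !repl_assoc. reflexivity. Qed.
Lemma hasT_flip X : hasT (flip X) <-> hasF X.
Proof. unfold flip. induction X; simpl; tauto. Qed.
Lemma hasF_flip X : hasF (flip X) <-> hasT X.
Proof. unfold flip. induction X; simpl; tauto. Qed.
Lemma flip_inj X Y : flip X = flip Y -> X = Y.
Proof. intros e. rewrite <- (flip_flip X), <- (flip_flip Y). congruence. Qed.

Lemma leviF X1 X2 Y1 Y2 : hasF Y1 -> hasF Y2 -> repl X1 LT Y1 = repl X2 LT Y2 ->
  (~ hasF X1 /\ X1 = X2) \/ (exists E, Y1 = repl E LT Y2 /\ X2 = repl X1 LT E)
  \/ (exists E, Y2 = repl E LT Y1 /\ X1 = repl X2 LT E).
Proof.
  intros H1 H2 e. apply (f_equal flip) in e. rewrite !flip_T in e.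
  destruct (leviT _ _ _ _ (proj2 (hasT_flip _) H1) (proj2 (hasT_flip _) H2) e)
    as [[n q]|[[E [p q]]|[E [p q]]]].
  - left. split. { rewrite <- hasT_flip. auto. } apply flip_inj; auto.
  - right; left. exists (flip E). split; apply flip_inj; rewrite flip_T, flip_flip; auto.
  - right; right. exists (flip E). split; apply flip_inj; rewrite flip_T, flip_flip; auto.
Qed.

Lemma leviM X1 X2 Y1 Y2 : mixed Y1 -> mixed Y2 -> repl X1 LT Y1 = repl X2 Y2 LF ->
  (~ hasF X2 /\ exists Y', Y2 = repl Y' LT Y1 /\ X1 = repl X2 Y' LF)
  \/ (~ hasT X1 /\ exists Y', Y1 = repl Y' Y2 LF /\ X2 = repl X1 LT Y').
Proof.
  intros H1 H2. revert X2. induction X1 as [| |X11 IH1 a X12 IH2]; intros X2 e.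
  - exfalso. destruct X2 as [| |X21 b X22]; simpl in e; try discriminate.
    subst. destruct H2 as [_ H2]. simpl in H2. tauto.
  - right. split; [simpl; tauto|]. exists X2. simpl in e. auto.
  - destruct X2 as [| |X21 b X22]; simpl in e; try discriminate.
    + left. split; [simpl; tauto|]. exists (Node X11 a X12). simpl. auto.
    + injection e; intros e2 ea e1. subst b.
      destruct (IH1 _ e1) as [[n1 [E [p1 q1]]]|[n1 [E [p1 q1]]]];
      destruct (IH2 _ e2) as [[n2 [E' [p2 q2]]]|[n2 [E' [p2 q2]]]].
      * left. split; [simpl; tauto|]. exists E. split; auto.
        assert (E = E') by (apply (injF _ _ Y1); [apply H1|congruence]). subst. simpl. congruence.
      * destruct (cycleM Y1 Y2 E E' H1 H2 p1 p2) as [-> ->].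
        left. split.
        { simpl. intros [?|?]; [tauto|]. subst X22.
          apply hasF_repl in H. simpl in H. tauto. }
        exists LF. split; auto. simpl. rewrite q1. f_equal.
        subst X22. rewrite repl_assoc. simpl. symmetry. apply noT_id. auto.
      * destruct (cycleM Y1 Y2 E' E H1 H2 p2 p1) as [-> ->].
        left. split.
        { simpl. intros [?|?]; [|tauto]. subst X21.
          apply hasF_repl in H. simpl in H. tauto. }
        exists LF. split; auto. simpl. rewrite q2. f_equal.
        subst X21. rewrite repl_assoc. simpl. symmetry. apply noT_id. auto.
      * right. split; [simpl; tauto|]. exists E. split; auto.
        assert (E = E') by (apply (injT _ _ Y2); [apply H2|congruence]). subst. simpl. congruence.
Qed.


Fixpoint eval (r : nat -> tree) (t : term A) : tree :=
  match t with
  | Var n => r n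
  | TT => LT
  | FF => LF
  | Atom a => Node LT a LF
  | Neg t => repl (eval r t) LF LT
  | AndL t u => repl (eval r t) (eval r u) LF
  | OrL t u => repl (eval r t) LT (eval r u)
  end.

Lemma eval_subst r s t : eval r (subst s t) = eval (fun n => eval r (s n)) t.
Proof. induction t; simpl; congruence. Qed.

Lemma eval_emb r P : eval r (emb P) = se P.
Proof. induction P; simpl; congruence. Qed.

Lemma ax_valid l u : EqFSCL l u -> forall r, eval r l = eval r u.
Proof.
  intros H r. destruct H; simpl; rewrite ?repl_assoc; simpl; rewrite ?repl_id; try reflexivity.
Qed.

Lemma sound t u : derivable (@EqFSCL A) t u -> forall rho, eval rho t = eval rho u.
Proof.
  induction 1; intros rho; simpl; try congruence.
  rewrite !eval_subst. apply ax_valid. auto.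
Qed.

Lemma sound_closed P Q : derivable (@EqFSCL A) (emb P) (emb Q) -> se P = se Q.
Proof.
  intros H. rewrite <- (eval_emb (fun _ => LT) P), <- (eval_emb (fun _ => LT) Q).
  apply sound. auto.
Qed.
Definition eqv (P Q : sterm A) := derivable (@EqFSCL A) (emb P) (emb Q).
Infix "≈" := eqv (at level 70).
Notation "P ⊓ Q" := (sAndL P Q) (at level 40, left associativity).
Notation "P ⊔ Q" := (sOrL P Q) (at level 50, left associativity).
Notation "! P" := (sNeg P) (at level 35, right associativity).

#[local] Instance eqv_equiv : Equivalence eqv.
Proof. split; intro; intros; [apply d_refl|apply d_sym; auto|eapply d_trans; eauto]. Qed.
#[local] Instance neg_proper : Proper (eqv ==> eqv) (@sNeg A).
Proof. intros ? ? H. apply d_neg. auto. Qed.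
#[local] Instance and_proper : Proper (eqv ==> eqv ==> eqv) (@sAndL A).
Proof. intros ? ? H ? ? H'. apply d_and; auto. Qed.
#[local] Instance or_proper : Proper (eqv ==> eqv ==> eqv) (@sOrL A).
Proof. intros ? ? H ? ? H'. apply d_or; auto. Qed.

Ltac axi c P Q R := exact (d_ax (@EqFSCL A) _ _
   (fun n => match n with 0 => emb P | 1 => emb Q | _ => emb R end) (c A)).

Implicit Types P Q R : sterm A.
Lemma ax1 : sF ≈ ! sT. Proof. axi F1 (@sT A) (@sT A) (@sT A). Qed.
Lemma ax2 P Q : P ⊔ Q ≈ !(!P ⊓ !Q). Proof. axi F2 P Q (@sT A). Qed.
Lemma ax3 P : !!P ≈ P. Proof. axi F3 P (@sT A) (@sT A). Qed.
Lemma ax4 P : sT ⊓ P ≈ P. Proof. axi F4 P (@sT A) (@sT A). Qed.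
Lemma ax5 P : P ⊔ sF ≈ P. Proof. axi F5 P (@sT A) (@sT A). Qed.
Lemma ax6 P : sF ⊓ P ≈ sF. Proof. axi F6 P (@sT A) (@sT A). Qed.
Lemma ax7 P Q R : P ⊓ Q ⊓ R ≈ P ⊓ (Q ⊓ R). Proof. axi F7 P Q R. Qed.
Lemma ax8 P : !P ⊓ sF ≈ P ⊓ sF. Proof. axi F8 P (@sT A) (@sT A). Qed.
Lemma ax9 P Q : P ⊓ sF ⊔ Q ≈ (P ⊔ sT) ⊓ Q. Proof. axi F9 P Q (@sT A). Qed.
Lemma ax10 P Q R : P ⊓ Q ⊔ R ⊓ sF ≈ (P ⊔ R ⊓ sF) ⊓ (Q ⊔ R ⊓ sF). Proof. axi F10 P Q R. Qed.


Lemma nT : !sT ≈ (@sF A). Proof. symmetry. apply ax1. Qed.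
Lemma nF : !sF ≈ (@sT A). Proof. rewrite ax1. apply ax3. Qed.
Lemma dm1 P Q : !(P ⊓ Q) ≈ !P ⊔ !Q. Proof. rewrite (ax2 (!P) (!Q)), !ax3. reflexivity. Qed.
Lemma dm2 P Q : !(P ⊔ Q) ≈ !P ⊓ !Q. Proof. rewrite ax2, ax3. reflexivity. Qed.
Lemma orA P Q R : P ⊔ Q ⊔ R ≈ P ⊔ (Q ⊔ R).
Proof. rewrite (ax2 (P ⊔ Q) R), (ax2 P (Q ⊔ R)), !dm2, ax7. reflexivity. Qed.
Lemma orFl P : sF ⊔ P ≈ P. Proof. rewrite ax2, nF, ax4, ax3. reflexivity. Qed.
Lemma orTl P : sT ⊔ P ≈ sT. Proof. rewrite ax2, nT, ax6, nF. reflexivity. Qed.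
Lemma andTr P : P ⊓ sT ≈ P.
Proof. rewrite <- (ax3 (P ⊓ sT)), dm1, nT, ax5, ax3. reflexivity. Qed.
Lemma orT8 P : !P ⊔ sT ≈ P ⊔ sT. Proof. rewrite !ax2, ax3, nT, ax8. reflexivity. Qed.
Lemma dual10 P Q R : (P ⊔ Q) ⊓ (R ⊔ sT) ≈ P ⊓ (R ⊔ sT) ⊔ Q ⊓ (R ⊔ sT).
Proof.
  assert (H := ax10 (!P) (!Q) (!R)). apply neg_proper in H.
  rewrite (dm2 (!P ⊓ !Q) (!R ⊓ sF)), (dm1 (!P) (!Q)), (dm1 (!R) sF), !ax3, nF in H.
  rewrite (dm1 (!P ⊔ (!R ⊓ sF)) (!Q ⊔ (!R ⊓ sF))), (dm2 (!P) (!R ⊓ sF)), (dm2 (!Q) (!R ⊓ sF)),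
    (dm1 (!R) sF), !ax3, nF in H. exact H.
Qed.
Lemma absF P R : R ⊓ sF ⊓ P ≈ R ⊓ sF. Proof. rewrite ax7, ax6. reflexivity. Qed.
Lemma absT P R : R ⊔ sT ⊔ P ≈ R ⊔ sT. Proof. rewrite orA, orTl. reflexivity. Qed.

Notation Tt t := (t ≈ t ⊔ sT).
Notation Ff f := (f ≈ f ⊓ sF).

Lemma Tt_absorb t P : Tt t -> t ⊔ P ≈ t.
Proof. intros H. rewrite H at 1. rewrite absT. symmetry. exact H. Qed.
Lemma Ff_absorb f P : Ff f -> f ⊓ P ≈ f.
Proof. intros H. rewrite H at 1. rewrite absF. symmetry. exact H. Qed.
Lemma Tt_ext P Q : P ≈ Q -> Tt Q -> Tt P.
Proof. intros E H. rewrite E. exact H. Qed.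
Lemma Ff_ext P Q : P ≈ Q -> Ff Q -> Ff P.
Proof. intros E H. rewrite E. exact H. Qed.
Lemma Tt_orT P : Tt (P ⊔ sT). Proof. symmetry. apply absT. Qed.
Lemma Ff_andF P : Ff (P ⊓ sF). Proof. symmetry. apply absF. Qed.
Lemma Tt_T : Tt (@sT A). Proof. symmetry. apply orTl. Qed.
Lemma Ff_F : Ff (@sF A). Proof. symmetry. apply ax6. Qed.
Lemma Tt_neg f : Ff f -> Tt (!f).
Proof. intros H. rewrite H at 1. rewrite dm1, nF. reflexivity. Qed.
Lemma Ff_neg t : Tt t -> Ff (!t).
Proof. intros H. rewrite H at 1. rewrite dm2, nT. reflexivity. Qed.
Lemma Ff_and P g : Ff g -> Ff (P ⊓ g).
Proof. intros H. rewrite ax7, <- H. reflexivity. Qed.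
Lemma Tt_and t s : Tt t -> Tt s -> Tt (t ⊓ s).
Proof.
  intros Ht Hs. apply Tt_ext with ((t ⊓ sF ⊔ s) ⊔ sT); [|apply Tt_orT].
  rewrite orA, <- Hs, ax9, <- Ht. reflexivity.
Qed.
Lemma FtoTF g : Ff g -> g ≈ (g ⊔ sT) ⊓ sF.
Proof. intros H. rewrite <- ax9, ax5. exact H. Qed.
Lemma negT_F u : Tt u -> !u ≈ u ⊓ sF.
Proof. intros H. transitivity (!u ⊓ sF); [apply Ff_neg; auto|apply ax8]. Qed.

Lemma comm P t f : Tt t -> Ff f -> P ⊓ t ⊔ f ≈ (P ⊔ f) ⊓ t.
Proof.
  intros Ht Hf. assert (E := ax10 P t f). rewrite <- Hf in E. rewrite E.
  rewrite (Tt_absorb t f Ht). reflexivity.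
Qed.
Lemma distT P Q t : Tt t -> (P ⊔ Q) ⊓ t ≈ P ⊓ t ⊔ Q ⊓ t.
Proof. intros Ht. assert (E := dual10 P Q t). rewrite <- Ht in E. exact E. Qed.
Lemma distF P Q h : Ff h -> P ⊓ Q ⊔ h ≈ (P ⊔ h) ⊓ (Q ⊔ h).
Proof. intros Hh. assert (E := ax10 P Q h). rewrite <- Hh in E. exact E. Qed.

Lemma C5 P g h : Ff g -> Ff h -> (P ⊔ h) ⊓ g ≈ (!P ⊔ g) ⊓ h.
Proof.
  intros Hg Hh.
  rewrite (FtoTF g Hg) at 1.
  rewrite <- (ax7 (P ⊔ h) (g ⊔ sT) sF).
  rewrite (dual10 P h g).
  rewrite (Ff_absorb h (g ⊔ sT) Hh).
  rewrite <- (ax8 (P ⊓ (g ⊔ sT) ⊔ h)).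
  rewrite (dm2 (P ⊓ (g ⊔ sT)) h).
  rewrite (ax7 (!(P ⊓ (g ⊔ sT))) (!h) sF).
  rewrite (ax8 h). rewrite <- Hh.
  rewrite (dm1 P (g ⊔ sT)). rewrite (dm2 g sT). rewrite nT. rewrite (ax8 g). rewrite <- Hg.
  reflexivity.
Qed.

Lemma C5' P s t : Tt s -> Tt t -> !P ⊓ s ⊔ t ≈ P ⊓ t ⊔ s.
Proof.
  intros Hs Ht.
  transitivity (!((P ⊔ !s) ⊓ !t)).
  { rewrite (dm1 (P ⊔ !s) (!t)), (dm2 P (!s)), !ax3. reflexivity. }
  rewrite (C5 P (!t) (!s)) by (apply Ff_neg; auto).
  rewrite (dm1 (!P ⊔ !t) (!s)), (dm2 (!P) (!t)), !ax3. reflexivity.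
Qed.

Lemma C6 P Q g : Ff g -> (P ⊔ Q) ⊓ g ≈ (!P ⊔ g) ⊓ (Q ⊓ g).
Proof.
  intros Hg.
  rewrite (FtoTF g Hg) at 1.
  rewrite <- (ax7 (P ⊔ Q) (g ⊔ sT) sF).
  rewrite (dual10 P Q g).
  rewrite <- (ax8 (P ⊓ (g ⊔ sT) ⊔ Q ⊓ (g ⊔ sT))).
  rewrite (dm2 (P ⊓ (g ⊔ sT)) (Q ⊓ (g ⊔ sT))).
  rewrite (ax7 (!(P ⊓ (g ⊔ sT))) (!(Q ⊓ (g ⊔ sT))) sF).
  rewrite (ax8 (Q ⊓ (g ⊔ sT))).
  rewrite (ax7 Q (g ⊔ sT) sF). rewrite <- (FtoTF g Hg).
  rewrite (dm1 P (g ⊔ sT)). rewrite (dm2 g sT). rewrite nT. rewrite (ax8 g). rewrite <- Hg.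
  reflexivity.
Qed.

Lemma C3 P Q g : Ff g -> (P ⊔ Q) ⊓ g ≈ (P ⊔ Q ⊓ g) ⊓ g.
Proof.
  intros Hg. rewrite (C6 P Q g Hg), (C6 P (Q ⊓ g) g Hg), (ax7 Q g g), (Ff_absorb g g Hg).
  reflexivity.
Qed.

Lemma TFcore a t1 t2 g : Tt t1 -> Tt t2 -> Ff g ->
  (a ⊓ t1 ⊔ t2) ⊓ g ≈ (a ⊔ t2 ⊓ g) ⊓ (t1 ⊓ g).
Proof.
  intros H1 H2 Hg.
  rewrite (FtoTF g Hg) at 1.
  rewrite <- (ax7 (a ⊓ t1 ⊔ t2) (g ⊔ sT) sF).
  rewrite (dual10 (a ⊓ t1) t2 g).
  rewrite (ax7 a t1 (g ⊔ sT)).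
  rewrite <- (ax8 (a ⊓ (t1 ⊓ (g ⊔ sT)) ⊔ t2 ⊓ (g ⊔ sT))).
  rewrite (dm2 (a ⊓ (t1 ⊓ (g ⊔ sT))) (t2 ⊓ (g ⊔ sT))).
  rewrite (ax7 (!(a ⊓ (t1 ⊓ (g ⊔ sT)))) (!(t2 ⊓ (g ⊔ sT))) sF).
  rewrite (ax8 (t2 ⊓ (g ⊔ sT))).
  rewrite (dm1 a (t1 ⊓ (g ⊔ sT))).
  rewrite (negT_F (t1 ⊓ (g ⊔ sT))) by (apply Tt_and; [auto|apply Tt_orT]).
  rewrite (ax7 t1 (g ⊔ sT) sF), (ax7 t2 (g ⊔ sT) sF), <- (FtoTF g Hg).
  symmetry. apply C5; apply Ff_and; auto.
Qed.

Inductive isT : sterm A -> Prop :=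
| isT_T : isT sT
| isT_N a t1 t2 : isT t1 -> isT t2 -> isT (sAtom a ⊓ t1 ⊔ t2).
Inductive isF : sterm A -> Prop :=
| isF_F : isF sF
| isF_N a f1 f2 : isF f1 -> isF f2 -> isF ((sAtom a ⊔ f2) ⊓ f1).
Inductive isL : sterm A -> Prop :=
| isL_p a t f : isT t -> isF f -> isL (sAtom a ⊓ t ⊔ f)
| isL_n a t f : isT t -> isF f -> isL (!sAtom a ⊓ t ⊔ f).
Inductive kind := KL | KA | KO.
Inductive isMk : kind -> sterm A -> Prop :=
| mk_L m : isL m -> isMk KL m
| mk_A k k' c m : isMk k c -> k <> KA -> isMk k' m -> isMk KA (c ⊓ m)
| mk_O k k' d m : isMk k d -> k <> KO -> isMk k' m -> isMk KO (d ⊔ m).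
Definition isM m := exists k, isMk k m.
Definition isN n := isT n \/ isF n \/ exists t m, n = t ⊓ m /\ isT t /\ isM m.

Lemma isT_Tt t : isT t -> Tt t.
Proof. induction 1. apply Tt_T. rewrite orA, <- IHisT2. reflexivity. Qed.
Lemma isF_Ff f : isF f -> Ff f.
Proof. induction 1. apply Ff_F. rewrite ax7, <- IHisF1. reflexivity. Qed.

Lemma N_negT t : isT t -> exists f, isF f /\ !t ≈ f.
Proof.
  induction 1 as [|a t1 t2 H1 [f1 [F1 E1]] H2 [f2 [F2 E2]]].
  - exists sF. split. constructor. apply nT.
  - exists ((sAtom a ⊔ f2) ⊓ f1). split. constructor; auto.
    rewrite dm2, dm1, E1, E2. symmetry. apply C5; apply isF_Ff; auto.
Qed.
Lemma N_negF f : isF f -> exists t, isT t /\ !f ≈ t.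
Proof.
  induction 1 as [|a f1 f2 H1 [t1 [T1 E1]] H2 [t2 [T2 E2]]].
  - exists sT. split. constructor. apply nF.
  - exists (sAtom a ⊓ t1 ⊔ t2). split. constructor; auto.
    rewrite dm1, dm2, E1, E2. apply C5'; apply isT_Tt; auto.
Qed.
Lemma N_TT t s : isT t -> isT s -> exists u, isT u /\ t ⊓ s ≈ u.
Proof.
  intros Ht Hs. induction Ht as [|a t1 t2 H1 [u1 [U1 E1]] H2 [u2 [U2 E2]]].
  - exists s. split; auto. apply ax4.
  - exists (sAtom a ⊓ u1 ⊔ u2). split. constructor; auto.
    rewrite distT by (apply isT_Tt; auto). rewrite ax7, E1, E2. reflexivity.
Qed.
Lemma N_TF t g : isT t -> isF g -> exists u, isF u /\ t ⊓ g ≈ u.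
Proof.
  intros Ht Hg. induction Ht as [|a t1 t2 H1 [u1 [U1 E1]] H2 [u2 [U2 E2]]].
  - exists g. split; auto. apply ax4.
  - exists ((sAtom a ⊔ u2) ⊓ u1). split. constructor; auto.
    rewrite TFcore by (apply isT_Tt || apply isF_Ff; auto). rewrite E1, E2. reflexivity.
Qed.
Lemma N_FFor f h : isF f -> isF h -> exists u, isF u /\ f ⊔ h ≈ u.
Proof.
  intros Hf Hh. induction Hf as [|a f1 f2 H1 [u1 [U1 E1]] H2 [u2 [U2 E2]]].
  - exists h. split; auto. apply orFl.
  - exists ((sAtom a ⊔ u2) ⊓ u1). split. constructor; auto.
    rewrite distF by (apply isF_Ff; auto). rewrite orA, E1, E2. reflexivity.
Qed.

Lemma N_negL m : isL m -> exists m', isL m' /\ !m ≈ m'.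
Proof.
  intros [a t f Ht Hf|a t f Ht Hf];
    destruct (N_negT t Ht) as [f' [F' E1]]; destruct (N_negF f Hf) as [t' [T' E2]].
  - exists (!sAtom a ⊓ t' ⊔ f'). split. constructor; auto.
    rewrite dm2, dm1, E1, E2. symmetry. apply comm; [apply isT_Tt|apply isF_Ff]; auto.
  - exists (sAtom a ⊓ t' ⊔ f'). split. constructor; auto.
    rewrite dm2, dm1, ax3, E1, E2. symmetry. apply comm; [apply isT_Tt|apply isF_Ff]; auto.
Qed.

Definition dualk k := match k with KL => KL | KA => KO | KO => KA end.

Lemma N_negM k m : isMk k m -> exists m', isMk (dualk k) m' /\ !m ≈ m'.
Proof.
  induction 1 as [m Hm|k k' c m Hc [c' [C' Ec]] Hk Hm [m' [M' Em]]|k k' d m Hd [d' [D' Ed]] Hk Hm [m' [M' Em]]].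
  - destruct (N_negL m Hm) as [m' [L' E]]. exists m'. split; auto. constructor; auto.
  - exists (c' ⊔ m'). split. apply mk_O with (dualk k) (dualk k'); auto. destruct k; simpl; congruence.
    rewrite dm1, Ec, Em. reflexivity.
  - exists (d' ⊓ m'). split. apply mk_A with (dualk k) (dualk k'); auto. destruct k; simpl; congruence.
    rewrite dm2, Ed, Em. reflexivity.
Qed.

Lemma N_MT k m s : isMk k m -> isT s -> exists m', isMk k m' /\ m ⊓ s ≈ m'.
Proof.
  intros Hm Hs. assert (Ts := isT_Tt s Hs).
  induction Hm as [m Hm|k k' c m Hc IHc Hk Hm [m' [M' Em]]|k k' d m Hd [d' [D' Ed]] Hk Hm [m' [M' Em]]].
  - destruct Hm as [a t f Ht Hf|a t f Ht Hf]; destruct (N_TT t s Ht Hs) as [u [U Eu]].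
    + exists (sAtom a ⊓ u ⊔ f). split. constructor. constructor; auto.
      rewrite distT by auto. rewrite ax7, Eu, (Ff_absorb f s) by (apply isF_Ff; auto). reflexivity.
    + exists (!sAtom a ⊓ u ⊔ f). split. constructor. constructor; auto.
      rewrite distT by auto. rewrite ax7, Eu, (Ff_absorb f s) by (apply isF_Ff; auto). reflexivity.
  - exists (c ⊓ m'). split. econstructor; eauto. rewrite ax7, Em. reflexivity.
  - exists (d' ⊔ m'). split. econstructor; eauto. rewrite distT by auto. rewrite Ed, Em. reflexivity.
Qed.

Lemma N_MM k m m2 : isMk k m -> isM m2 -> exists m', isM m' /\ m ⊓ m2 ≈ m'.
Proof.
  intros Hm [k2 Hm2].
  induction Hm as [m Hm|k k' c m Hc IHc Hk Hm [m' [[k'' M'] Em]]|k k' d m Hd IHd Hk Hm IHm].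
  - exists (m ⊓ m2). split; [|reflexivity]. exists KA. apply mk_A with KL k2; [constructor; auto|discriminate|auto].
  - exists (c ⊓ m'). split. exists KA. apply mk_A with k k''; auto. rewrite ax7, Em. reflexivity.
  - exists ((d ⊔ m) ⊓ m2). split; [|reflexivity]. exists KA. apply mk_A with KO k2; [econstructor; eauto|discriminate|auto].
Qed.

Lemma N_MFF k m : isMk k m -> forall g h, isF g -> isF h -> exists u, isF u /\ (m ⊔ h) ⊓ g ≈ u.
Proof.
  induction 1 as [m Hm|k k' c m Hc IHc Hk Hm IHm|k k' d m Hd IHd Hk Hm IHm]; intros g h Hg Hh.
  - destruct Hm as [a t f Ht Hf|a t f Ht Hf]; destruct (N_TF t g Ht Hg) as [u [U Eu]];
      destruct (N_FFor _ _ Hf Hh) as [k' [K' Ek]].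
    + exists ((sAtom a ⊔ k') ⊓ u). split. constructor; auto.
      rewrite orA, Ek, comm by (apply isT_Tt || apply isF_Ff; auto). rewrite ax7, Eu. reflexivity.
    + exists ((sAtom a ⊔ u) ⊓ k'). split. constructor; auto.
      rewrite orA, Ek, comm by (apply isT_Tt || apply isF_Ff; auto). rewrite ax7, Eu.
      symmetry. apply C5; apply isF_Ff; auto.
  - destruct (IHm g h Hg Hh) as [k1 [K1 E1]].
    destruct (IHc k1 h K1 Hh) as [u [U Eu]].
    exists u. split; auto. rewrite distF by (apply isF_Ff; auto). rewrite ax7, E1. exact Eu.
  - destruct (IHm g h Hg Hh) as [k1 [K1 E1]].
    destruct (IHd g k1 Hg K1) as [u [U Eu]].
    exists u. split; auto. rewrite orA, C3 by (apply isF_Ff; auto). rewrite E1. exact Eu.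
Qed.

Lemma N_MF k m g : isMk k m -> isF g -> exists u, isF u /\ m ⊓ g ≈ u.
Proof.
  intros Hm Hg. destruct (N_MFF k m Hm g sF Hg isF_F) as [u [U E]].
  exists u. split; auto. rewrite <- E, ax5. reflexivity.
Qed.

Lemma N_neg n : isN n -> exists n', isN n' /\ !n ≈ n'.
Proof.
  intros [Hn|[Hn|[t [m [-> [Ht [k Hm]]]]]]].
  - destruct (N_negT n Hn) as [f [F E]]. exists f. split; auto. right; left; auto.
  - destruct (N_negF n Hn) as [t [T E]]. exists t. split; auto. left; auto.
  - destruct (N_negT t Ht) as [f [F Ef]]. destruct (N_negF f F) as [t' [T' Et']].
    destruct (N_negM k m Hm) as [m' [M' Em]].
    exists (t' ⊓ m'). split. right; right. exists t', m'. split; auto. split; auto. exists (dualk k); auto.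
    rewrite dm1, Ef, Em. rewrite (isF_Ff f F) at 1. rewrite ax9, <- orT8, Et'.
    rewrite <- (isT_Tt t' T'). reflexivity.
Qed.

Lemma N_and n1 n2 : isN n1 -> isN n2 -> exists n, isN n /\ n1 ⊓ n2 ≈ n.
Proof.
  intros H1 H2. destruct H1 as [T1|[F1|[t [m [-> [Ht [k Hm]]]]]]].
  - destruct H2 as [T2|[F2|[s [m2 [-> [Hs Hm2]]]]]].
    + destruct (N_TT n1 n2 T1 T2) as [u [U E]]. exists u. split; auto. left; auto.
    + destruct (N_TF n1 n2 T1 F2) as [u [U E]]. exists u. split; auto. right; left; auto.
    + destruct (N_TT n1 s T1 Hs) as [u [U E]]. exists (u ⊓ m2). split.
      right; right. exists u, m2. auto. rewrite <- ax7, E. reflexivity.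
  - exists n1. split. right; left; auto. apply Ff_absorb, isF_Ff; auto.
  - destruct H2 as [T2|[F2|[s [m2 [-> [Hs Hm2]]]]]].
    + destruct (N_MT k m n2 Hm T2) as [m' [M' E]]. exists (t ⊓ m'). split.
      right; right. exists t, m'. split; auto. split; auto. exists k; auto.
      rewrite ax7, E. reflexivity.
    + destruct (N_MF k m n2 Hm F2) as [u [U E]]. destruct (N_TF t u Ht U) as [v [V Ev]].
      exists v. split. right; left; auto. rewrite ax7, E. exact Ev.
    + destruct (N_MT k m s Hm Hs) as [m' [M' E]]. destruct (N_MM k m' m2 M' Hm2) as [m'' [M'' E']].
      exists (t ⊓ m''). split. right; right. exists t, m''. auto.
      rewrite ax7, <- (ax7 m s m2), E, E'. reflexivity.
Qed.

Lemma normalize P : exists n, isN n /\ P ≈ n.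
Proof.
  induction P as [| |a|P [n [N E]]|P [n1 [N1 E1]] Q [n2 [N2 E2]]|P [n1 [N1 E1]] Q [n2 [N2 E2]]].
  - exists sT. split. left; constructor. reflexivity.
  - exists sF. split. right; left; constructor. reflexivity.
  - exists (sT ⊓ (sAtom a ⊓ sT ⊔ sF)). split.
    + right; right. exists sT, (sAtom a ⊓ sT ⊔ sF). split; auto. split. constructor.
      exists KL. constructor. constructor; constructor.
    + rewrite ax4, ax5, andTr. reflexivity.
  - destruct (N_neg n N) as [n' [N' E']]. exists n'. split; auto. rewrite E. exact E'.
  - destruct (N_and n1 n2 N1 N2) as [n [N E]]. exists n. split; auto. rewrite E1, E2. exact E.
  - destruct (N_neg n1 N1) as [m1 [M1 F1]]. destruct (N_neg n2 N2) as [m2 [M2 F2]].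
    destruct (N_and m1 m2 M1 M2) as [m [M Em]]. destruct (N_neg m M) as [n [N En]].
    exists n. split; auto. rewrite ax2, E1, E2, F1, F2, Em. exact En.
Qed.

Lemma hasT_dec (X : tree) : hasT X \/ ~ hasT X.
Proof. induction X; simpl; tauto. Qed.
Lemma hasF_dec (X : tree) : hasF X \/ ~ hasF X.
Proof. induction X; simpl; tauto. Qed.

Lemma se_TN a t1 t2 : ~ hasF (se t1) -> se (sAtom a ⊓ t1 ⊔ t2) = Node (se t1) a (se t2).
Proof. intros H. simpl. rewrite noF_id by auto. reflexivity. Qed.
Lemma se_FN a f1 f2 : ~ hasT (se f2) -> se ((sAtom a ⊔ f2) ⊓ f1) = Node (se f1) a (se f2).
Proof. intros H. simpl. rewrite noT_id by auto. reflexivity. Qed.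
Lemma se_Ln a t f : ~ hasF (se t) -> se (!sAtom a ⊓ t ⊔ f) = Node (se f) a (se t).
Proof. intros H. simpl. rewrite noF_id by auto. reflexivity. Qed.

Lemma se_isT t : isT t -> ~ hasF (se t) /\ hasT (se t).
Proof. induction 1; [simpl; tauto|]. rewrite se_TN by tauto. simpl. tauto. Qed.
Lemma se_isF f : isF f -> ~ hasT (se f) /\ hasF (se f).
Proof. induction 1; [simpl; tauto|]. rewrite se_FN by tauto. simpl. tauto. Qed.

Lemma isT_inj t t' : isT t -> isT t' -> se t = se t' -> t = t'.
Proof.
  intros H. revert t'. induction H as [|a t1 t2 H1 IH1 H2 IH2]; intros t' H' e;
    destruct H' as [|a' t1' t2' H1' H2']; auto.
  - rewrite se_TN in e by (apply se_isT; auto). discriminate.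
  - rewrite se_TN in e by (apply se_isT; auto). discriminate.
  - rewrite !se_TN in e by (apply se_isT; auto). injection e; intros. subst.
    f_equal; [f_equal|]; auto.
Qed.
Lemma isF_inj f f' : isF f -> isF f' -> se f = se f' -> f = f'.
Proof.
  intros H. revert f'. induction H as [|a f1 f2 H1 IH1 H2 IH2]; intros f' H' e;
    destruct H' as [|a' f1' f2' H1' H2']; auto.
  - rewrite se_FN in e by (apply se_isF; auto). discriminate.
  - rewrite se_FN in e by (apply se_isF; auto). discriminate.
  - rewrite !se_FN in e by (apply se_isF; auto). injection e; intros. subst.
    f_equal; [f_equal|]; auto.
Qed.

Definition TP m := forall E Y, ~ hasF E -> mixed Y -> se m = repl E Y LF -> E = LT.
Definition FP m := forall E Y, ~ hasT E -> mixed Y -> se m = repl E LT Y -> E = LF.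
Definition NDT m := forall C E, hasT C -> mixed E -> se m = repl C E LF -> C = LT.
Definition NDF m := forall C E, hasF C -> mixed E -> se m = repl C LT E -> C = LF.

Lemma childT (Z C1 E : tree) : ~ hasF Z -> hasT Z -> mixed E -> Z = repl C1 E LF -> False.
Proof.
  intros nF hT [mT mF] e. destruct (hasT_dec C1) as [h|h].
  - apply nF. rewrite e. apply hasF_repl. auto.
  - rewrite noT_id in e by auto. subst. auto.
Qed.
Lemma childF (Z C1 E : tree) : ~ hasT Z -> hasF Z -> mixed E -> Z = repl C1 LT E -> False.
Proof.
  intros nT hF [mT mF] e. destruct (hasF_dec C1) as [h|h].
  - apply nT. rewrite e. apply hasT_repl. auto.
  - rewrite noF_id in e by auto. subst. auto.
Qed.

Lemma TP_of m : NDT m -> TP m.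
Proof.
  intros H E Y nE mY e. apply (H E Y); auto. destruct (hasT_or_hasF E); tauto.
Qed.
Lemma FP_of m : NDF m -> FP m.
Proof.
  intros H E Y nE mY e. apply (H E Y); auto. destruct (hasT_or_hasF E); tauto.
Qed.

Lemma Lit_props m : isL m -> mixed (se m) /\ NDT m /\ NDF m.
Proof.
  intros [a t f Ht Hf|a t f Ht Hf]; destruct (se_isT t Ht) as [t1 t2];
    destruct (se_isF f Hf) as [f1 f2].
  - unfold NDT, NDF. rewrite se_TN by auto. split; [split; simpl; tauto|split].
    + intros C E hC mE e. destruct C as [| |C1 b C2]; auto; simpl in e; try discriminate.
      injection e; intros. exfalso. eapply childT with (Z := se t); eauto.
    + intros C E hC mE e. destruct C as [| |C1 b C2]; auto; simpl in e; try discriminate.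
      injection e; intros. exfalso. eapply childF with (Z := se f); eauto.
  - unfold NDT, NDF. rewrite se_Ln by auto. split; [split; simpl; tauto|split].
    + intros C E hC mE e. destruct C as [| |C1 b C2]; auto; simpl in e; try discriminate.
      injection e; intros. exfalso. eapply childT with (Z := se t); eauto.
    + intros C E hC mE e. destruct C as [| |C1 b C2]; auto; simpl in e; try discriminate.
      injection e; intros. exfalso. eapply childF with (Z := se f); eauto.
Qed.

Lemma Pm k m : isMk k m -> mixed (se m) /\ TP m /\ FP m /\ (k <> KA -> NDT m) /\ (k <> KO -> NDF m).
Proof.
  induction 1 as [m Hm|k k' c m Hc [cM [cTP [cFP [cNDT cNDF]]]] Hk Hm [mM [mTP [mFP _]]]
                 |k k' d m Hd [dM [dTP [dFP [dNDT dNDF]]]] Hk Hm [mM [mTP [mFP _]]]].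
  - destruct (Lit_props m Hm) as [M [T F]].
    exact (conj M (conj (TP_of _ T) (conj (FP_of _ F) (conj (fun _ => T) (fun _ => F))))).
  - specialize (cNDT Hk). destruct cM as [cT cF]. destruct mM as [mT mF].
    assert (NF : NDF (c ⊓ m)).
    { intros C E hC [eT eF] e. simpl in e. symmetry in e.
      destruct (leviM C (se c) E (se m) (conj eT eF) (conj mT mF) e)
        as [[n _]|[n [Y' [p q]]]]; [tauto|].
      apply (cFP C Y'); auto. split.
      - destruct (hasT_dec Y') as [h|h]; auto. rewrite noT_id in p by auto. subst. tauto.
      - destruct (hasF_dec Y') as [h|h]; auto. exfalso. rewrite q in cF.
        apply hasF_repl in cF. simpl in cF. tauto. }
    repeat split.
    + simpl. apply hasT_repl. auto.
    + simpl. apply hasF_repl. simpl. auto.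
    + intros E Y nE [yT yF] e. simpl in e.
      destruct (leviT (se c) E (se m) Y mT yT e) as [[n _]|[[E' [p q]]|[E' [p q]]]].
      * tauto.
      * exfalso. apply nE. rewrite q. apply hasF_repl. simpl. auto.
      * apply (cTP E E'); auto. split.
        -- destruct (hasT_dec E') as [h|h]; auto. rewrite noT_id in p by auto. subst. tauto.
        -- destruct (hasF_dec E') as [h|h]; auto. exfalso. rewrite q in cF.
           apply hasF_repl in cF. simpl in cF. tauto.
    + apply FP_of. auto.
    + intros H. congruence.
    + intros _. auto.
  - specialize (dNDF Hk). destruct dM as [dT dF]. destruct mM as [mT mF].
    assert (NT : NDT (d ⊔ m)).
    { intros C E hC [eT eF] e. simpl in e.
      destruct (leviM (se d) C (se m) E (conj mT mF) (conj eT eF) e)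
        as [[n [Y' [p q]]]|[n _]]; [|tauto].
      apply (dTP C Y'); auto. split.
      - destruct (hasT_dec Y') as [h|h]; auto. exfalso. rewrite q in dT.
        apply hasT_repl in dT. simpl in dT. tauto.
      - destruct (hasF_dec Y') as [h|h]; auto. rewrite noF_id in p by auto. subst. tauto. }
    repeat split.
    + simpl. apply hasT_repl. simpl. auto.
    + simpl. apply hasF_repl. auto.
    + apply TP_of. auto.
    + intros E Y nE [yT yF] e. simpl in e.
      destruct (leviF (se d) E (se m) Y mF yF e) as [[n _]|[[E' [p q]]|[E' [p q]]]].
      * tauto.
      * exfalso. apply nE. rewrite q. apply hasT_repl. simpl. auto.
      * apply (dFP E E'); auto. split.
        -- destruct (hasT_dec E') as [h|h]; auto. exfalso. rewrite q in dT.
           apply hasT_repl in dT. simpl in dT. tauto.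
        -- destruct (hasF_dec E') as [h|h]; auto. rewrite noF_id in p by auto. subst. tauto.
    + intros _. auto.
    + intros H. congruence.
Qed.

Lemma M_inj k m : isMk k m -> forall k' m', isMk k' m' -> se m = se m' -> m = m'.
Proof.
  intros H. induction H as [m Hm|k k0 c m Hc IHc Hk Hm IHm|k k0 d m Hd IHd Hk Hm IHm];
    intros k' m' H' e.
  - destruct H' as [m' Hm'|k1 k1' c' m1' Hc' Hk1 Hm1'|k1 k1' d' m1' Hd' Hk1 Hm1'].
    + destruct Hm as [a t f Ht Hf|a t f Ht Hf]; destruct Hm' as [a' t' f' Ht' Hf'|a' t' f' Ht' Hf'];
        destruct (se_isT t Ht) as [t1 t2]; destruct (se_isF f Hf) as [f1 f2];
        destruct (se_isT t' Ht') as [t1' t2']; destruct (se_isF f' Hf') as [f1' f2'];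
        rewrite ?se_TN, ?se_Ln in e by auto; injection e; intros; subst.
      * f_equal; [f_equal; apply isT_inj|apply isF_inj]; auto.
      * exfalso. match goal with H : se _ = se _ |- _ => rewrite H in *; tauto end.
      * exfalso. match goal with H : se _ = se _ |- _ => rewrite H in *; tauto end.
      * f_equal; [f_equal; apply isT_inj|apply isF_inj]; auto.
    + exfalso. destruct (Pm _ _ Hc') as [[cT cF] _]. destruct (Pm _ _ Hm1') as [mM _].
      destruct (Lit_props m Hm) as [_ [NT _]].
      assert (se c' = LT) by (apply (NT (se c') (se m1')); auto). rewrite H in cF. simpl in cF. auto.
    + exfalso. destruct (Pm _ _ Hd') as [[cT cF] _]. destruct (Pm _ _ Hm1') as [mM _].
      destruct (Lit_props m Hm) as [_ [_ NF]].
      assert (se d' = LF) by (apply (NF (se d') (se m1')); auto). rewrite H in cT. simpl in cT. auto.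
  - destruct (Pm _ _ Hc) as [[cT cF] [cTP [cFP [cNDT cNDF]]]]. specialize (cNDT Hk).
    destruct (Pm _ _ Hm) as [[mT mF] [mTP _]].
    destruct H' as [m' Hm'|k1 k1' c' m1' Hc' Hk1 Hm1'|k1 k1' d' m1' Hd' Hk1 Hm1'].
    + exfalso. destruct (Lit_props m' Hm') as [_ [NT _]].
      assert (se c = LT) by (apply (NT (se c) (se m)); auto; split; auto). rewrite H in cF. simpl in cF. auto.
    + destruct (Pm _ _ Hc') as [[cT' cF'] [cTP' [cFP' [cNDT' cNDF']]]]. specialize (cNDT' Hk1).
      destruct (Pm _ _ Hm1') as [[mT' mF'] [mTP' _]].
      simpl in e. destruct (leviT (se c) (se c') (se m) (se m1') mT mT' e)
        as [[n _]|[[E [p q]]|[E [p q]]]]; [tauto| |].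
      * assert (E = LT).
        { destruct (hasF_dec E) as [h|h].
          - exfalso. assert (se c = LT); [|rewrite H in cF; simpl in cF; auto].
            apply (cNDT' (se c) E); auto. split; auto.
            destruct (hasT_dec E) as [h'|h']; auto. rewrite noT_id in p by auto. subst. tauto.
          - apply (mTP E (se m1')); auto. split; auto. }
        subst E. simpl in p. rewrite repl_id in q.
        f_equal; [apply (IHc k1 c')|apply (IHm k1' m1')]; auto.
      * assert (E = LT).
        { destruct (hasF_dec E) as [h|h].
          - exfalso. assert (se c' = LT); [|rewrite H in cF'; simpl in cF'; auto].
            apply (cNDT (se c') E); auto. split; auto.
            destruct (hasT_dec E) as [h'|h']; auto. rewrite noT_id in p by auto. subst. tauto.
          - apply (mTP' E (se m)); auto. split; auto. }
        subst E. simpl in p. rewrite repl_id in q.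
        f_equal; [apply (IHc k1 c')|apply (IHm k1' m1')]; auto.
    + exfalso. destruct (Pm _ _ Hd') as [[dT' dF'] _]. destruct (Pm _ _ Hm1') as [mM' _].
      destruct (Pm _ _ (mk_A _ _ _ _ Hc Hk Hm)) as [_ [_ [_ [_ NF]]]].
      assert (se d' = LF) by (apply (NF ltac:(discriminate) (se d') (se m1')); auto). rewrite H in dT'. simpl in dT'. auto.
  - destruct (Pm _ _ Hd) as [[dT dF] [dTP [dFP [dNDT dNDF]]]]. specialize (dNDF Hk).
    destruct (Pm _ _ Hm) as [[mT mF] [_ [mFP _]]].
    destruct H' as [m' Hm'|k1 k1' c' m1' Hc' Hk1 Hm1'|k1 k1' d' m1' Hd' Hk1 Hm1'].
    + exfalso. destruct (Lit_props m' Hm') as [_ [_ NF]].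
      assert (se d = LF) by (apply (NF (se d) (se m)); auto; split; auto). rewrite H in dT. simpl in dT. auto.
    + exfalso. destruct (Pm _ _ (mk_A _ _ _ _ Hc' Hk1 Hm1')) as [_ [_ [_ [_ NF]]]].
      assert (se d = LF) by (apply (NF ltac:(discriminate) (se d) (se m)); auto; split; auto).
      rewrite H in dT. simpl in dT. auto.
    + destruct (Pm _ _ Hd') as [[dT' dF'] [dTP' [dFP' [dNDT' dNDF']]]]. specialize (dNDF' Hk1).
      destruct (Pm _ _ Hm1') as [[mT' mF'] [_ [mFP' _]]].
      simpl in e. destruct (leviF (se d) (se d') (se m) (se m1') mF mF' e)
        as [[n _]|[[E [p q]]|[E [p q]]]]; [tauto| |].
      * assert (E = LF).
        { destruct (hasT_dec E) as [h|h].
          - exfalso. assert (se d = LF); [|rewrite H in dT; simpl in dT; auto].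
            apply (dNDF' (se d) E); auto. split; auto.
            destruct (hasF_dec E) as [h'|h']; auto. rewrite noF_id in p by auto. subst. tauto.
          - apply (mFP E (se m1')); auto. split; auto. }
        subst E. simpl in p. rewrite repl_id in q.
        f_equal; [apply (IHd k1 d')|apply (IHm k1' m1')]; auto.
      * assert (E = LF).
        { destruct (hasT_dec E) as [h|h].
          - exfalso. assert (se d' = LF); [|rewrite H in dT'; simpl in dT'; auto].
            apply (dNDF (se d') E); auto. split; auto.
            destruct (hasF_dec E) as [h'|h']; auto. rewrite noF_id in p by auto. subst. tauto.
          - apply (mFP' E (se m)); auto. split; auto. }
        subst E. simpl in p. rewrite repl_id in q.
        f_equal; [apply (IHd k1 d')|apply (IHm k1' m1')]; auto.
Qed.

Lemma N_inj n n' : isN n -> isN n' -> se n = se n' -> n = n'.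
Proof.
  intros [T1|[F1|[t [m [-> [Ht [k Hm]]]]]]] [T2|[F2|[t' [m' [-> [Ht' [k' Hm']]]]]]] e.
  - apply isT_inj; auto.
  - exfalso. destruct (se_isT _ T1). destruct (se_isF _ F2). rewrite e in *. tauto.
  - exfalso. destruct (se_isT _ T1) as [a _]. destruct (Pm _ _ Hm') as [[_ mF] _].
    destruct (se_isT _ Ht') as [_ b]. rewrite e in a. apply a. simpl. apply hasF_repl. auto.
  - exfalso. destruct (se_isT _ T2). destruct (se_isF _ F1). rewrite e in *. tauto.
  - apply isF_inj; auto.
  - exfalso. destruct (se_isF _ F1) as [a _]. destruct (Pm _ _ Hm') as [[mT _] _].
    destruct (se_isT _ Ht') as [_ b]. rewrite e in a. apply a. simpl. apply hasT_repl. auto.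
  - exfalso. destruct (se_isT _ T2) as [a _]. destruct (Pm _ _ Hm) as [[_ mF] _].
    destruct (se_isT _ Ht) as [_ b]. rewrite <- e in a. apply a. simpl. apply hasF_repl. auto.
  - exfalso. destruct (se_isF _ F2) as [a _]. destruct (Pm _ _ Hm) as [[mT _] _].
    destruct (se_isT _ Ht) as [_ b]. rewrite <- e in a. apply a. simpl. apply hasT_repl. auto.
  - destruct (Pm _ _ Hm) as [[mT mF] [mTP _]]. destruct (Pm _ _ Hm') as [[mT' mF'] [mTP' _]].
    destruct (se_isT _ Ht) as [tF tT]. destruct (se_isT _ Ht') as [tF' tT'].
    simpl in e. destruct (leviT (se t) (se t') (se m) (se m') mT mT' e)
      as [[n _]|[[E [p q]]|[E [p q]]]]; [tauto| |].
    + assert (E = LT).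
      { apply (mTP E (se m')); auto; [|split; auto].
        intro h. apply tF'. rewrite q. apply hasF_repl. auto. }
      subst E. simpl in p. rewrite repl_id in q.
      f_equal; [apply isT_inj|apply (M_inj k m Hm k' m')]; auto.
    + assert (E = LT).
      { apply (mTP' E (se m)); auto; [|split; auto].
        intro h. apply tF. rewrite q. apply hasF_repl. auto. }
      subst E. simpl in p. rewrite repl_id in q.
      f_equal; [apply isT_inj|apply (M_inj k m Hm k' m')]; auto.
Qed.
End Trees. 

Theorem theorem2p4 (A : Type) (HA : inhabited A) (P Q : sterm A) :
  derivable (@EqFSCL A) (emb P) (emb Q) <-> se P = se Q.
Proof.
  split.
  - apply sound_closed.
  - intros e. destruct (normalize A P) as [n [N En]]. destruct (normalize A Q) as [n' [N' En']].
    assert (n = n').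
    { apply (N_inj A); auto. rewrite <- (sound_closed A P n En), <- (sound_closed A Q n' En'). auto. }
    subst n'. eapply d_trans; [exact En|]. apply d_sym. exact En'.
Qed.
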